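(* Let $\mathfrak g$ and the infinite quiver $Q(\mathfrak g)$ be as in the context, and let $\mathbb C(\mathbf X)$ be the field of rational functions in the $X$-variables $X^i_n$ of $Q(\mathfrak g)$ with Poisson bracket $\{X_u,X_v\}=\varepsilon_{uv}X_uX_v$. Let $\mathbb C(a)$ be the field of rational functions in variables $a_i(n)$, $i\in S$, $n\in d\mathbb Z$, with log-canonical Poisson bracket determined by $\{a_i(n),a_i(n')\}=(\delta_{n',n+d_i}-\delta_{n',n-d_i})a_i(n)a_i(n')$; for $i<j$ with $d_i\le d_j$: $\{a_i(n),a_j(n')\}=(\delta_{n',n+B_{ij}}-\delta_{n',n})a_i(n)a_j(n')$; for $i<j$ with $d_i>d_j$: $\{a_i(n),a_j(n')\}=(\delta_{n',n+B_{ij}/2}-\delta_{n',n-B_{ij}/2})a_i(n)a_j(n')$; and all other pairs of generators Poisson commuting (brackets for $i>j$ given by antisymmetry). Then the field isomorphism $\beta:\mathbb C(\mathbf X)\to\mathbb C(a)$, $X^i_n\mapsto a_i(n)^{-1}$, is a Poisson map.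
   Context: Let $\mathfrak g$ be a finite-dimensional complex simple Lie algebra of rank $\ell$, $S=\{1,\dots,\ell\}$, of type $A_\ell$, $B_\ell$, $C_\ell$, $D_\ell$ ($\ell\ge4$), $E_{6,7,8}$, $F_4$ or $G_2$, with simple roots labelled: for $A_\ell,B_\ell,C_\ell$ the chain $1-2-\cdots-\ell$ ($\alpha_\ell$ short in $B_\ell$, long in $C_\ell$); $D_\ell$: chain $1-\cdots-(\ell-1)$ plus edge $(\ell-2)-\ell$; $E_\ell$: chain $1-2-3-5-\cdots-\ell$ plus edge $3-4$; $F_4$: chain $1-2-3-4$, $\alpha_1,\alpha_2$ long; $G_2$: $\alpha_2$ long. $d_i=(\alpha_i,\alpha_i)/2$ normalized: $d_i=1$ in types $A,D,E$; $(1,\dots,1,\frac12)$ for $B_\ell$; $(1,\dots,1,2)$ for $C_\ell$; $(1,1,\frac12,\frac12)$ for $F_4$; $(1,3)$ for $G_2$; $d=\min d_i$. $C_{ij}=2(\alpha_i,\alpha_j)/(\alpha_i,\alpha_i)$ and $B_{ij}=d_iC_{ij}$. Quiver $Q(\mathfrak g)$ on $\{v^i_n: i\in S, n\in d\mathbb Z\}$, arrows for all $n$: (simply-laced) orient Dynkin edges from larger to smaller label ($C(\mathfrak g)$); $v^i_n\to v^i_{n+1}$, and for each $i\to j$ in $C(\mathfrak g)$, $v^i_n\to v^j_n$ and $v^j_{n+1}\to v^i_n$. ($B_\ell$) $v^i_n\to v^i_{n+1}$ ($i\le\ell-1$); $v^i_n\to v^{i-1}_n$, $v^{i-1}_{n+1}\to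 v^i_n$ ($2\le i\le\ell-1$); $v^\ell_n\to v^\ell_{n+1/2}$, $v^\ell_n\to v^{\ell-1}_{n-1/2}$, $v^{\ell-1}_{n+1/2}\to v^\ell_n$. ($C_\ell$) $v^i_n\to v^i_{n+1}$ ($i\le\ell-1$); $v^i_n\to v^{i-1}_n$, $v^{i-1}_{n+1}\to v^i_n$ ($2\le i\le\ell-1$); $v^\ell_n\to v^\ell_{n+2}$, $v^\ell_n\to v^{\ell-1}_n$, $v^{\ell-1}_{n+2}\to v^\ell_n$. ($F_4$) $v^i_n\to v^i_{n+1}$ ($i=1,2$); $v^2_n\to v^1_n$, $v^1_{n+1}\to v^2_n$; $v^3_n\to v^3_{n+1/2}$, $v^3_n\to v^2_{n-1/2}$, $v^2_{n+1/2}\to v^3_n$; $v^4_n\to v^4_{n+1/2}$, $v^4_n\to v^3_n$, $v^3_{n+1/2}\to v^4_n$. ($G_2$) $v^1_n\to v^1_{n+1}$, $v^2_n\to v^2_{n+3}$, $v^2_n\to v^1_n$, $v^1_{n+3}\to v^2_n$. Exchange matrix $\varepsilon_{uv}=\#\{u\to v\}-\#\{v\to u\}$; $X^i_n$ is the $X$-variable at $v^i_n$. *)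

(* Defs.v *)
From HB Require Import structures.
From mathcomp Require Import all_boot all_order all_algebra.
From mathcomp Require Import reals Rstruct.
From mathcomp.real_closed Require Import complex.
From mathcomp Require Import mpoly.
From Stdlib Require Import Rdefinitions.

Set Implicit Arguments.
Unset Strict Implicit.
Unset Printing Implicit Defensive.

Import Order.TTheory GRing.Theory Num.Theory.
Local Open Scope ring_scope.

Definition CC : fieldType := complex Rdefinitions.R.

Inductive lie_type :=
| TA of nat | TB of nat | TC of nat | TD of nat
| TE6 | TE7 | TE8 | TF4 | TG2.

Definition rank (t : lie_type) : nat :=
  match t with
  | TA l | TB l | TC l | TD l => l
  | TE6 => 6 | TE7 => 7 | TE8 => 8 | TF4 => 4 | TG2 => 2
  end.

Definition valid_type (t : lie_type) : bool :=
  match t with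
  | TA l => (1 <= l)%nat
  | TB l | TC l => (2 <= l)%nat
  | TD l => (4 <= l)%nat
  | _ => true
  end.

Definition inS (t : lie_type) (i : nat) : bool := (1 <= i <= rank t)%nat.

Definition simply_laced (t : lie_type) : bool :=
  match t with TA _ | TD _ | TE6 | TE7 | TE8 => true | _ => false end.

(* d_i = (alpha_i, alpha_i)/2 *)
Definition dd (t : lie_type) (i : nat) : rat :=
  match t with
  | TB l => if i == l then 1 / 2 else 1
  | TC l => if i == l then 2 else 1
  | TF4 => if (i <= 2)%nat then 1 else 1 / 2
  | TG2 => if i == 2 then 3 else 1
  | _ => 1
  end.

Definition dmin (t : lie_type) : rat :=
  \big[Num.min/dd t 1]_(1 <= i < (rank t).+1) dd t i.

Definition adj1 (i j : nat) : bool := (i.+1 == j) || (j.+1 == i).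
Definition epair (a b i j : nat) : bool :=
  ((i == a) && (j == b)) || ((i == b) && (j == a)).

Definition dynkin_edge (t : lie_type) (i j : nat) : bool :=
  inS t i && inS t j &&
  match t with
  | TA _ | TB _ | TC _ | TF4 | TG2 => adj1 i j
  | TD l => (adj1 i j && (maxn i j <= l.-1)%nat) || epair (l - 2) l i j
  | TE6 | TE7 | TE8 =>
      [|| epair 1 2 i j, epair 2 3 i j, epair 3 4 i j, epair 3 5 i j
        | adj1 i j && (5 <= minn i j)%nat]
  end.

(* Cartan matrix C_ij = 2 (alpha_i, alpha_j) / (alpha_i, alpha_i); for an
   edge {i,j}, (alpha_i, alpha_j) = - max(d_i, d_j). *)
Definition cartanC (t : lie_type) (i j : nat) : rat :=
  if i == j then 2
  else if dynkin_edge t i j then - Num.max (dd t i) (dd t j) / dd t i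
  else 0.

Definition cartanB (t : lie_type) (i j : nat) : rat := dd t i * cartanC t i j.

Definition vertex := (nat * rat)%type.

Definition vertex_ok (t : lie_type) (u : vertex) : bool :=
  inS t u.1 && ((u.2 / dmin t) \is a Num.int).

(* number of arrows (i,n) -> (j,m) in Q(g), one boolean per arrow family *)
Definition arrow_rules (t : lie_type) (i : nat) (n : rat) (j : nat) (m : rat)
    : seq bool :=
  match t with
  | TA _ | TD _ | TE6 | TE7 | TE8 =>
      (* C(g): edges oriented from the larger to the smaller label *)
      [:: (i == j) && (m == n + 1);
          (* v^i_n -> v^j_n for i -> j, i.e. i > j *)
          dynkin_edge t i j && (j < i)%nat && (m == n);
          (* v^q_{n+1} -> v^p_n for p -> q, i.e. here q = i < p = j *)
          dynkin_edge t i j && (i < j)%nat && (n == m + 1)]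
  | TB l =>
      [:: (i == j) && (i <= l.-1)%nat && (m == n + 1);
          (2 <= i <= l.-1)%nat && (j == i.-1) && (m == n);
          (2 <= j <= l.-1)%nat && (i == j.-1) && (n == m + 1);
          (i == l) && (j == l) && (m == n + 1 / 2);
          (i == l) && (j == l.-1) && (m == n - 1 / 2);
          (i == l.-1) && (j == l) && (n == m + 1 / 2)]
  | TC l =>
      [:: (i == j) && (i <= l.-1)%nat && (m == n + 1);
          (2 <= i <= l.-1)%nat && (j == i.-1) && (m == n);
          (2 <= j <= l.-1)%nat && (i == j.-1) && (n == m + 1);
          (i == l) && (j == l) && (m == n + 2);
          (i == l) && (j == l.-1) && (m == n);
          (i == l.-1) && (j == l) && (n == m + 2)]
  | TF4 =>
      [:: (i == j) && (i <= 2)%nat && (m == n + 1);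
          (i == 2) && (j == 1) && (m == n);
          (i == 1) && (j == 2) && (n == m + 1);
          (i == 3) && (j == 3) && (m == n + 1 / 2);
          (i == 3) && (j == 2) && (m == n - 1 / 2);
          (i == 2) && (j == 3) && (n == m + 1 / 2);
          (i == 4) && (j == 4) && (m == n + 1 / 2);
          (i == 4) && (j == 3) && (m == n);
          (i == 3) && (j == 4) && (n == m + 1 / 2)]
  | TG2 =>
      [:: (i == 1) && (j == 1) && (m == n + 1);
          (i == 2) && (j == 2) && (m == n + 3);
          (i == 2) && (j == 1) && (m == n);
          (i == 1) && (j == 2) && (n == m + 3)]
  end.

Definition n_arrows (t : lie_type) (u v : vertex) : nat :=
  count id (arrow_rules t u.1 u.2 v.1 v.2).

Definition eps (t : lie_type) (u v : vertex) : int :=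
  (n_arrows t u v)%:Z - (n_arrows t v u)%:Z.

(* Log-canonical coefficients of the bracket on C(a):
   {a_i(n), a_j(n')} = abr (i,n) (j,n') a_i(n) a_j(n'). *)
Definition delta (b : bool) : int := (b : nat)%:Z.

Definition abr_lt (t : lie_type) (i : nat) (n : rat) (j : nat) (n' : rat)
    : int :=
  if dd t i <= dd t j then
    delta (n' == n + cartanB t i j) - delta (n' == n)
  else
    delta (n' == n + cartanB t i j / 2) - delta (n' == n - cartanB t i j / 2).

Definition abr (t : lie_type) (u v : vertex) : int :=
  let: (i, n) := u in let: (j, n') := v in
  if i == j then delta (n' == n + dd t i) - delta (n' == n - dd t i)
  else if (i < j)%nat then abr_lt t i n j n'
  else - abr_lt t j n' i n.

Definition poisson_bracket (K : fieldType) (iota : {rmorphism CC -> K})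
    (br : K -> K -> K) : Prop :=
  [/\ (forall f g, br f g = - br g f),
      (forall f g h, br f (g + h) = br f g + br f h),
      (forall c f g, br f (iota c * g) = iota c * br f g),
      (forall f g h, br f (g * h) = br f g * h + g * br f h)
    & (forall f g h, br f (br g h) + br g (br h f) + br h (br f g) = 0)].

Definition field_generated (K : fieldType) (iota : {rmorphism CC -> K})
    (P : vertex -> bool) (x : vertex -> K) : Prop :=
  forall Q : K -> Prop,
    (forall c, Q (iota c)) ->
    (forall u, P u -> Q (x u)) ->
    (forall f g, Q f -> Q g -> Q (f + g)) ->
    (forall f, Q f -> Q (- f)) ->
    (forall f g, Q f -> Q g -> Q (f * g)) ->
    (forall f, Q f -> Q f^-1) ->
    forall f, Q f.

Definition alg_independent (K : fieldType) (iota : {rmorphism CC -> K})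
    (P : vertex -> bool) (x : vertex -> K) : Prop :=
  forall (m : nat) (w : 'I_m -> vertex), injective w -> (forall k, P (w k)) ->
  forall p : {mpoly CC[m]}, mmap iota (fun k => x (w k)) p = 0 -> p = 0.

Definition log_canonical_ratfun_field (K : fieldType)
    (iota : {rmorphism CC -> K}) (P : vertex -> bool) (x : vertex -> K)
    (c : vertex -> vertex -> int) (br : K -> K -> K) : Prop :=
  [/\ field_generated iota P x, alg_independent iota P x,
      poisson_bracket iota br
    & forall u v, P u -> P v -> br (x u) (x v) = (c u v)%:~R * x u * x v].

(* Main.v *)
Require Import Defs.
From HB Require Import structures.
From mathcomp Require Import all_boot all_order all_algebra.
From mathcomp Require Import reals Rstruct.
From mathcomp.real_closed Require Import complex.
From mathcomp Require Import mpoly.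
From mathcomp Require Import ring lra zify.

Import Order.TTheory GRing.Theory Num.Theory.
Local Open Scope ring_scope.

Section Br.
Variables (K : fieldType) (iota : {rmorphism CC -> K}) (br : K -> K -> K).
Hypothesis Hp : poisson_bracket iota br.

Lemma br0r f : br f 0 = 0.
Proof.
case: Hp => _ HD _ _ _.
have H := HD f 0 0; rewrite addr0 in H.
by apply: (addrI (br f 0)); rewrite addr0 -H.
Qed.

Lemma brNr f g : br f (- g) = - br f g.
Proof.
case: Hp => _ HD _ _ _.
apply/eqP; rewrite -addr_eq0 addrC -HD addrN; exact/eqP/br0r.
Qed.

Lemma br1r f : br f 1 = 0.
Proof.
case: Hp => _ _ _ HM _.
have := HM f 1 1; rewrite !mulr1 mul1r => H.
by apply: (addrI (br f 1)); rewrite addr0 -H.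
Qed.

Lemma brCr f c : br f (iota c) = 0.
Proof.
case: Hp => _ _ HC _ _.
by rewrite -[iota c]mulr1 HC br1r mulr0.
Qed.

Lemma brVr f g : br f g^-1 = - (g^-1 * g^-1) * br f g.
Proof.
have [->|g0] := eqVneq g 0; first by rewrite invr0 br0r mulr0.
case: Hp => _ _ _ HM _.
have := HM f g g^-1; rewrite mulfV // br1r => /esym H.
have H2 : g * br f g^-1 = - (br f g * g^-1).
  by apply/eqP; rewrite -addr_eq0 addrC H.
have -> : br f g^-1 = g^-1 * (g * br f g^-1) by rewrite mulrA mulVf // mul1r.
by rewrite H2; ring.
Qed.

Lemma brAnti f g : br f g = - br g f.
Proof. by case: Hp. Qed.

End Br.
Arguments br0r {K iota br} Hp f.
Arguments brNr {K iota br} Hp f g.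
Arguments br1r {K iota br} Hp f.
Arguments brCr {K iota br} Hp f c.
Arguments brVr {K iota br} Hp f g.
Arguments brAnti {K iota br} Hp f g.

Lemma inv_log {K : fieldType} {iota : {rmorphism CC -> K}} {br : K -> K -> K}
  (Hp : poisson_bracket iota br) {x y : K} {c : int} :
  br x y = c%:~R * x * y -> br x^-1 y^-1 = c%:~R * x^-1 * y^-1.
Proof.
move=> H.
rewrite (brVr Hp) (brAnti Hp) (brVr Hp) (brAnti Hp) H.
have Hx : x^-1 * x^-1 * x = x^-1.
  have [->|x0] := eqVneq x 0; first by rewrite invr0 !mul0r.
  by rewrite -mulrA mulVf // mulr1.
have Hy : y^-1 * y^-1 * y = y^-1.
  have [->|y0] := eqVneq y 0; first by rewrite invr0 !mul0r.
  by rewrite -mulrA mulVf // mulr1.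
transitivity (c%:~R * (x^-1 * x^-1 * x) * (y^-1 * y^-1 * y)); first ring.
by rewrite Hx Hy.
Qed.

Section Transfer.
Variables (KX : fieldType) (iX : {rmorphism CC -> KX}) (brX : KX -> KX -> KX).
Variables (Ka : fieldType) (ia : {rmorphism CC -> Ka}) (bra : Ka -> Ka -> Ka).
Hypothesis HpX : poisson_bracket iX brX.
Hypothesis Hpa : poisson_bracket ia bra.
Variable beta : {rmorphism KX -> Ka}.
Hypothesis HbC : forall c, beta (iX c) = ia c.

Lemma transfer (P : vertex -> bool) (X : vertex -> KX)
  (Hgen : field_generated iX P X) h :
  (forall v, P v -> beta (brX h (X v)) = bra (beta h) (beta (X v))) ->
  forall g, beta (brX h g) = bra (beta h) (beta g).
Proof.
move=> Hv; apply: Hgen => //.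
- by move=> c; rewrite HbC (brCr HpX) (brCr Hpa) rmorph0.
- move=> f g Hf Hg.
  case: HpX => _ HD _ _ _; case: Hpa => _ HD' _ _ _.
  by rewrite HD !rmorphD Hf Hg HD'.
- by move=> f Hf; rewrite (brNr HpX) !rmorphN Hf (brNr Hpa).
- move=> f g Hf Hg.
  case: HpX => _ _ _ HM _; case: Hpa => _ _ _ HM' _.
  by rewrite HM !rmorphD !rmorphM Hf Hg HM'.
- by move=> f Hf; rewrite (brVr HpX) rmorphM rmorphN rmorphM fmorphV Hf (brVr Hpa).
Qed.
End Transfer.

Ltac kill_nat := try (exfalso; lia).
Ltac is_rat x := let T := type of x in unify T rat.
Ltac keep_rat P := match P with
 | @eq ?T _ _ => unify T rat
 | @eq ?T _ _ -> False => unify T rat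
 | ~ (@eq ?T _ _) => unify T rat
 | is_true (@Order.le _ _ ?x _) => is_rat x
 | is_true (@Order.lt _ _ ?x _) => is_rat x
 end.
Ltac clear_nat := repeat match goal with H : ?P |- _ =>
  tryif keep_rat P then fail else clear H end.
Ltac kill_rat := try (exfalso; clear_nat; lra);
  try (match goal with
   | H : ~ (@eq ?T _ _) |- _ => unify T rat; exfalso; apply: H; clear_nat; lra
   | H : @eq ?T _ _ -> False |- _ => unify T rat; exfalso; apply: H; clear_nat; lra end).
Ltac red_b := cbv beta iota zeta delta [andb orb negb fst snd].
Ltac split_nat :=
  repeat (rewrite ?eqxx; red_b;
  match goal with
  | |- context [ @eq_op _ ?x ?y ] =>
      let T := type of x in unify T nat;
        case: (@eqP nat x y) => ?; try subst; kill_nat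
  | |- context [ (?x <= ?y)%N ] => case: (leqP x y) => ?; kill_nat
  end).
Ltac split_ord :=
  repeat (red_b;
  match goal with
  | |- context [ (@Order.lt _ _ ?x ?y) ] =>
      is_rat x; case: (ltP x y) => ?; kill_rat
  | |- context [ (@Order.le _ _ ?x ?y) ] =>
      is_rat x; case: (leP x y) => ?; kill_rat
  end).
Ltac kill_diseq := try (match goal with H : @eq rat _ _ -> False |- _ =>
   exfalso; apply: H; clear_nat; lra end).
Ltac split_rat :=
  repeat (rewrite ?eqxx; red_b;
  match goal with
  | |- context [ @eq_op _ ?x ?y ] =>
        is_rat x;
        first [ rewrite (_ : (x == y) = true); last (by apply/eqP; clear_nat; lra)
              | rewrite (_ : (x == y) = false); last (by apply/negbTE/eqP => ?; clear_nat; lra)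
              | case: (@eqP _ x y) => ?; [ subst; kill_rat | ] ]
  end).
Ltac crush := cbv beta iota zeta delta [eps n_arrows arrow_rules abr abr_lt cartanB
   cartanC dd dynkin_edge inS rank Defs.adj1 Defs.epair Order.max fst snd andb orb negb];
   split_nat; clear_nat; split_ord; split_rat; try by [].


Lemma eps_abr_TA (l : nat) i j n m : (1 <= l)%N -> inS (TA l) i -> inS (TA l) j ->
  eps (TA l) (i,n) (j,m) = abr (TA l) (i,n) (j,m).
Proof.
rewrite /inS /= => Hl /andP[Hi1 Hi2] /andP[Hj1 Hj2].
have [?|[?|[?|?]]] : j = i \/ j = i.+1 \/ i = j.+1 \/ (i.+1 < j \/ j.+1 < i)%N by lia.
all: subst.
all: try (have [?|?] : i = l \/ (i < l)%N by lia).
all: try (have [?|?] : j = l \/ (j < l)%N by lia).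
all: subst; try (exfalso; lia).
all: crush.
Qed.

Lemma eps_abr_TB (l : nat) i j n m : (2 <= l)%N -> inS (TB l) i -> inS (TB l) j ->
  eps (TB l) (i,n) (j,m) = abr (TB l) (i,n) (j,m).
Proof.
rewrite /inS /= => Hl /andP[Hi1 Hi2] /andP[Hj1 Hj2].
have [?|[?|[?|?]]] : j = i \/ j = i.+1 \/ i = j.+1 \/ (i.+1 < j \/ j.+1 < i)%N by lia.
all: subst.
all: try (have [?|?] : i = l \/ (i < l)%N by lia).
all: try (have [?|?] : j = l \/ (j < l)%N by lia).
all: subst; try (exfalso; lia).
all: crush.
Qed.

Lemma eps_abr_TC (l : nat) i j n m : (2 <= l)%N -> inS (TC l) i -> inS (TC l) j ->
  eps (TC l) (i,n) (j,m) = abr (TC l) (i,n) (j,m).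
Proof.
rewrite /inS /= => Hl /andP[Hi1 Hi2] /andP[Hj1 Hj2].
have [?|[?|[?|?]]] : j = i \/ j = i.+1 \/ i = j.+1 \/ (i.+1 < j \/ j.+1 < i)%N by lia.
all: subst.
all: try (have [?|?] : i = l \/ (i < l)%N by lia).
all: try (have [?|?] : j = l \/ (j < l)%N by lia).
all: subst; try (exfalso; lia).
all: crush.
Qed.

Lemma eps_abr_TD (l : nat) i j n m : (4 <= l)%N -> inS (TD l) i -> inS (TD l) j ->
  eps (TD l) (i,n) (j,m) = abr (TD l) (i,n) (j,m).
Proof.
rewrite /inS /= => Hl /andP[Hi1 Hi2] /andP[Hj1 Hj2].
have [?|[?|[?|?]]] : j = i \/ j = i.+1 \/ i = j.+1 \/ (i.+1 < j \/ j.+1 < i)%N by lia.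
all: subst.
all: try (have [?|?] : i = l \/ (i < l)%N by lia).
all: try (have [?|?] : j = l \/ (j < l)%N by lia).
all: subst; try (exfalso; lia).
all: crush.
Qed.

Lemma eps_abr_TE6 (l : nat) i j n m : true -> inS (TE6) i -> inS (TE6) j ->
  eps (TE6) (i,n) (j,m) = abr (TE6) (i,n) (j,m).
Proof.
rewrite /inS /= => Hl /andP[Hi1 Hi2] /andP[Hj1 Hj2].
have [?|[?|[?|?]]] : j = i \/ j = i.+1 \/ i = j.+1 \/ (i.+1 < j \/ j.+1 < i)%N by lia.
all: subst; try (exfalso; lia).
all: crush.
Qed.

Lemma eps_abr_TE7 (l : nat) i j n m : true -> inS (TE7) i -> inS (TE7) j ->
  eps (TE7) (i,n) (j,m) = abr (TE7) (i,n) (j,m).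
Proof.
rewrite /inS /= => Hl /andP[Hi1 Hi2] /andP[Hj1 Hj2].
have [?|[?|[?|?]]] : j = i \/ j = i.+1 \/ i = j.+1 \/ (i.+1 < j \/ j.+1 < i)%N by lia.
all: subst; try (exfalso; lia).
all: crush.
Qed.

Lemma eps_abr_TE8 (l : nat) i j n m : true -> inS (TE8) i -> inS (TE8) j ->
  eps (TE8) (i,n) (j,m) = abr (TE8) (i,n) (j,m).
Proof.
rewrite /inS /= => Hl /andP[Hi1 Hi2] /andP[Hj1 Hj2].
have [?|[?|[?|?]]] : j = i \/ j = i.+1 \/ i = j.+1 \/ (i.+1 < j \/ j.+1 < i)%N by lia.
all: subst; try (exfalso; lia).
all: crush.
Qed.

Lemma eps_abr_TF4 (l : nat) i j n m : true -> inS (TF4) i -> inS (TF4) j ->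
  eps (TF4) (i,n) (j,m) = abr (TF4) (i,n) (j,m).
Proof.
rewrite /inS /= => Hl /andP[Hi1 Hi2] /andP[Hj1 Hj2].
have [?|[?|[?|?]]] : j = i \/ j = i.+1 \/ i = j.+1 \/ (i.+1 < j \/ j.+1 < i)%N by lia.
all: subst; try (exfalso; lia).
all: crush.
Qed.

Lemma eps_abr_TG2 (l : nat) i j n m : true -> inS (TG2) i -> inS (TG2) j ->
  eps (TG2) (i,n) (j,m) = abr (TG2) (i,n) (j,m).
Proof.
rewrite /inS /= => Hl /andP[Hi1 Hi2] /andP[Hj1 Hj2].
have [?|[?|[?|?]]] : j = i \/ j = i.+1 \/ i = j.+1 \/ (i.+1 < j \/ j.+1 < i)%N by lia.
all: subst; try (exfalso; lia).
all: crush.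
Qed.

Arguments transfer {KX iX brX Ka ia bra} HpX Hpa {beta} HbC {P X} Hgen h.

Lemma eps_abr {t : lie_type} {u v : vertex} : valid_type t -> vertex_ok t u -> vertex_ok t v ->
  eps t u v = abr t u v.
Proof.
case: u => i n; case: v => j m.
rewrite /vertex_ok /= => Ht /andP[Hi _] /andP[Hj _].
case: t Ht Hi Hj => [l|l|l|l| | | | |] Ht Hi Hj.
- exact: eps_abr_TA.
- exact: eps_abr_TB.
- exact: eps_abr_TC.
- exact: eps_abr_TD.
- exact: (eps_abr_TE6 0).
- exact: (eps_abr_TE7 0).
- exact: (eps_abr_TE8 0).
- exact: (eps_abr_TF4 0).
- exact: (eps_abr_TG2 0).
Qed.

Theorem proposition4p11 (t : lie_type) (Ht : valid_type t)
    (KX : fieldType) (iX : {rmorphism CC -> KX}) (X : vertex -> KX)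
    (brX : KX -> KX -> KX)
    (HX : log_canonical_ratfun_field iX (vertex_ok t) X (eps t) brX)
    (Ka : fieldType) (ia : {rmorphism CC -> Ka}) (a : vertex -> Ka)
    (bra : Ka -> Ka -> Ka)
    (Ha : log_canonical_ratfun_field ia (vertex_ok t) a (abr t) bra)
    (beta : {rmorphism KX -> Ka}) (Hbij : bijective beta)
    (HbC : forall c, beta (iX c) = ia c)
    (HbX : forall u, vertex_ok t u -> beta (X u) = (a u)^-1) :
  forall f g : KX, beta (brX f g) = bra (beta f) (beta g).
Proof.
case: HX => HgX _ HpX HXX; case: Ha => _ _ Hpa Haa.
have Hgen1 : forall u, vertex_ok t u ->
    forall g, beta (brX (X u) g) = bra (beta (X u)) (beta g).
  move=> u Hu; apply: (transfer HpX Hpa HbC HgX) => v Hv.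
  rewrite HXX // !rmorphM rmorph_int !HbX // (eps_abr Ht Hu Hv).
  by rewrite (inv_log Hpa (Haa u v Hu Hv)).
move=> f g.
move: g; apply: (transfer HpX Hpa HbC HgX) => v Hv.
by rewrite (brAnti HpX f) rmorphN Hgen1 // (brAnti Hpa (beta f)).
Qed.
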